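(* Let $G=(V,E)$ be a connected undirected graph (finite or infinite). Then $G$ has no multiplex $M$ such that both $\widetilde M\neq V$ and $\widetilde M$ is maximal for inclusion in the family $\{\widetilde N: N \text{ a multiplex of } G\}$.
   Context: A graph $G=(V,E)$ has vertex set $V$ and edge set $E\subseteq V^2$; it is undirected if $E$ is irreflexive and symmetric. Implication classes: on $E$ define $(a,b)\Gamma(a',b')$ iff either $a=a'$ and $(b,b')\notin E$, or $b=b'$ and $(a,a')\notin E$; the classes of the transitive closure $\Gamma^*$ are the implication classes. For an implication class $A$, $A^{-1}=\{(b,a):(a,b)\in A\}$ and the color class is $\widehat A=A\cup A^{-1}$. A simplex of rank $r\ge1$ is a complete sub-graph $S=(V_S,E_S)$ of $G$ on $r+1$ vertices whose distinct undirected edges lie in distinct color classes. A multiplex is a set of edges $M(S)=\bigcup\{\widehat A:\widehat A\text{ a color class},\ \widehat A\cap E_S\neq\emptyset\}$ for a simplex $S$; $\widetilde N$ denotes the set of vertices spanned by a multiplex $N$. *)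

(* Defs.v *)
From Stdlib Require Import List Relations.
Import ListNotations.

Section Graphs.
Variable V : Type.
Variable E : V -> V -> Prop.

Definition undirected : Prop :=
  (forall x, ~ E x x) /\ (forall x y, E x y -> E y x).

Definition connected : Prop :=
  forall x y, clos_refl_trans V E x y.

Definition Gamma (e f : V * V) : Prop :=
  E (fst e) (snd e) /\ E (fst f) (snd f) /\
  ((fst e = fst f /\ ~ E (snd e) (snd f)) \/
   (snd e = snd f /\ ~ E (fst e) (fst f))).

(* Gamma^* : transitive closure; implication classes are its classes *)
Definition Gamma_star : V * V -> V * V -> Prop := clos_trans (V * V) Gamma.

Definition in_impl_class (e f : V * V) : Prop := E (fst e) (snd e) /\ (e = f \/ Gamma_star e f).

Definition rev_edge (e : V * V) : V * V := (snd e, fst e).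

(* f lies in the color class A-hat = A u A^{-1}, where A is the implication class of e *)
Definition in_color_class (e f : V * V) : Prop :=
  in_impl_class e f \/ in_impl_class e (rev_edge f).

(* simplex of rank r >= 1: r+1 distinct pairwise adjacent vertices, whose
   distinct undirected edges lie in distinct color classes *)
Definition simplex (S : list V) : Prop :=
  2 <= length S /\ NoDup S /\
  (forall x y, In x S -> In y S -> x <> y -> E x y) /\
  (forall x y u w, In x S -> In y S -> In u S -> In w S -> x <> y -> u <> w ->
     in_color_class (x, y) (u, w) -> (x = u /\ y = w) \/ (x = w /\ y = u)).

Definition multiplex_of (S : list V) (f : V * V) : Prop :=
  exists x y, In x S /\ In y S /\ x <> y /\ in_color_class (x, y) f.

Definition is_multiplex (M : V * V -> Prop) : Prop :=
  exists S, simplex S /\ forall f, M f <-> multiplex_of S f.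

Definition span (M : V * V -> Prop) (v : V) : Prop :=
  exists f, M f /\ (fst f = v \/ snd f = v).

End Graphs.

(* Main.v *)
Require Import Defs.
From Stdlib Require Import List Relations Classical.
Import ListNotations.
From Stdlib Require Import Lia.

Lemma gamma_edges {V} (E : V -> V -> Prop) g h :
  Gamma V E g h -> E (fst g) (snd g) /\ E (fst h) (snd h).
Proof. unfold Gamma; tauto. Qed.

Lemma rev_rev {V} (g : V * V) : rev_edge V (rev_edge V g) = g.
Proof. destruct g; reflexivity. Qed.

Lemma gamma_rev {V} (E : V -> V -> Prop) g h : undirected V E ->
  Gamma V E g h -> Gamma V E (rev_edge V g) (rev_edge V h).
Proof.
  intros [_ Hs]; destruct g as [a b], h as [c d]; unfold Gamma, rev_edge; simpl.
  intros (H1 & H2 & H3); split; [auto|split; [auto|]]; tauto.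
Qed.

Lemma impl_edge {V} (E : V -> V -> Prop) e g :
  in_impl_class V E e g -> E (fst g) (snd g).
Proof.
  intros [He [<-|Ht]]; auto.
  induction Ht; [apply (gamma_edges E _ _ H)|auto].
Qed.

Lemma impl_step {V} (E : V -> V -> Prop) e g h :
  in_impl_class V E e g -> Gamma V E g h -> in_impl_class V E e h.
Proof.
  intros [He [<-|Ht]] Hg; split; auto; right.
  - now apply t_step.
  - eapply t_trans; eauto. now apply t_step.
Qed.

Lemma impl_refl {V} (E : V -> V -> Prop) e :
  E (fst e) (snd e) -> in_impl_class V E e e.
Proof. intros; split; auto. Qed.

Lemma impl_ind {V} (E : V -> V -> Prop) e (P : V * V -> Prop) :
  P e -> (forall g h, in_impl_class V E e g -> P g -> Gamma V E g h -> P h) ->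
  forall g, in_impl_class V E e g -> P g.
Proof.
  intros Pe Hst g [He [<-|Ht]]; auto.
  apply clos_trans_tn1 in Ht. induction Ht.
  - apply (Hst e y); auto. now apply impl_refl.
  - apply (Hst y z); auto. split; auto. right. now apply clos_tn1_trans.
Qed.

Lemma impl_rev {V} (E : V -> V -> Prop) e g : undirected V E ->
  in_impl_class V E e g -> in_impl_class V E (rev_edge V e) (rev_edge V g).
Proof.
  intros Hu Hi. assert (He := proj1 Hi). pattern g. revert g Hi. apply impl_ind.
  - apply impl_refl. destruct Hu as [_ Hs]. destruct e; simpl. apply Hs. exact He.
  - intros g h _ Hg Hgh. eapply impl_step; eauto. now apply gamma_rev.
Qed.

Lemma color_step {V} (E : V -> V -> Prop) e f g : undirected V E ->
  in_color_class V E e f -> Gamma V E f g -> in_color_class V E e g.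
Proof.
  intros Hu [H|H] Hg; [left|right]; eapply impl_step; eauto.
  now apply gamma_rev.
Qed.

Lemma color_rev {V} (E : V -> V -> Prop) e f :
  in_color_class V E e f -> in_color_class V E e (rev_edge V f).
Proof. intros [H|H]; [right|left]; rewrite ?rev_rev; auto. Qed.

Lemma color_rev_e {V} (E : V -> V -> Prop) e f : undirected V E ->
  in_color_class V E (rev_edge V e) f -> in_color_class V E e f.
Proof.
  intros Hu [H|H]; apply (impl_rev E) in H; auto; rewrite rev_rev in H;
  [right|left]; rewrite ?rev_rev in H; auto.
Qed.

Lemma color_edge {V} (E : V -> V -> Prop) e f : undirected V E ->
  in_color_class V E e f -> E (fst f) (snd f).
Proof.
  intros [_ Hs] [H|H]; apply impl_edge in H; destruct f; simpl in *; auto.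
Qed.

Lemma mult_step {V} (E : V -> V -> Prop) S f g : undirected V E ->
  multiplex_of V E S f -> Gamma V E f g -> multiplex_of V E S g.
Proof.
  intros Hu (x & y & Hx & Hy & Hxy & Hc) Hg. exists x, y; repeat split; auto.
  eapply color_step; eauto.
Qed.

Lemma mult_rev {V} (E : V -> V -> Prop) S f :
  multiplex_of V E S f -> multiplex_of V E S (rev_edge V f).
Proof.
  intros (x & y & Hx & Hy & Hxy & Hc). exists x, y; repeat split; auto.
  now apply color_rev.
Qed.

Lemma mult_edge {V} (E : V -> V -> Prop) S f : undirected V E ->
  multiplex_of V E S f -> E (fst f) (snd f).
Proof. intros Hu (x & y & Hx & Hy & Hxy & Hc). eapply color_edge; eauto. Qed.

Lemma mult_mono {V} (E : V -> V -> Prop) S S' f : incl S S' ->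
  multiplex_of V E S f -> multiplex_of V E S' f.
Proof. intros Hi (x & y & Hx & Hy & Hxy & Hc). exists x, y; repeat split; auto. Qed.

Lemma mult_self {V} (E : V -> V -> Prop) S x y : In x S -> In y S -> x <> y -> E x y ->
  multiplex_of V E S (x, y).
Proof. intros. exists x, y; repeat split; auto. left. now apply impl_refl. Qed.

Lemma simplex2 {V} (E : V -> V -> Prop) b s : undirected V E -> b <> s -> E b s ->
  simplex V E [b; s].
Proof.
  intros [Hi Hs] Hbs Eb. split; [simpl; auto|split].
  - constructor; [simpl; intuition|constructor; [simpl; auto|constructor]].
  - split.
    + simpl; intros x y [<-|[<-|[]]] [<-|[<-|[]]] Hxy; auto; now contradiction Hxy.
    + simpl; intros x y u w [<-|[<-|[]]] [<-|[<-|[]]] [<-|[<-|[]]] [<-|[<-|[]]] Hxy Huw _;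
      auto; (now contradiction Hxy) || (now contradiction Huw).
Qed.

Theorem lemma4p9 (V : Type) (E : V -> V -> Prop)
  (Hund : undirected V E) (Hconn : connected V E) :
  ~ (exists M : V * V -> Prop,
       is_multiplex V E M /\
       ~ (forall v, span V M v) /\
       (forall N : V * V -> Prop, is_multiplex V E N ->
          (forall v, span V M v -> span V N v) ->
          (forall v, span V N v -> span V M v))).
Proof.
  intros [M [[S [HS HM]] [Hnot Hmax]]].
  assert (Hu := Hund). destruct Hund as [Hirr Hsym].
  pose proof HS as (Hlen & Hnd & Hcl & Hcol).
  set (W := span V (multiplex_of V E S)).
  assert (HWM : forall v, span V M v <-> W v).
  { intro v; unfold W, span; split; intros [f [Hf Hv]]; exists f; split; auto; apply HM; auto. }
  assert (HWf : forall f, multiplex_of V E S f -> W (fst f) /\ W (snd f)).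
  { intros f Hf; split; exists f; auto. }
  assert (Htwo : exists s1 s2, In s1 S /\ In s2 S /\ s1 <> s2).
  { destruct S as [|s1 [|s2 r]]; simpl in Hlen; try lia.
    inversion Hnd; subst. exists s1, s2; simpl; repeat split; auto.
    intro; subst; apply H1; simpl; auto. }
  destruct Htwo as (s1 & s2 & Hs1 & Hs2 & Hs12).
  assert (HSW : forall x, In x S -> W x).
  { intros x Hx. destruct (classic (x = s1)) as [->|Hne].
    - apply (HWf (s1, s2)). apply mult_self; auto.
    - apply (HWf (x, s1)). apply mult_self; auto. }
  destruct (not_all_ex_not _ _ Hnot) as [v0 Hv0]. rewrite HWM in Hv0.
  assert (Hcross : forall x y, clos_refl_trans_1n V E x y -> W x -> ~ W y ->
            exists a b, W a /\ ~ W b /\ E a b).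
  { induction 1; intros; [contradiction|]. destruct (classic (W y)); eauto. }
  destruct (Hcross s1 v0 (clos_rt_rt1n _ _ _ _ (Hconn s1 v0)) (HSW _ Hs1) Hv0)
    as (a & b & Ha & Hb & Eab).
  assert (L2 : forall o h, ~ W o -> multiplex_of V E S h -> E o (fst h) -> E o (snd h)).
  { intros o [p q] Ho Hh Ep; simpl in *. apply NNPP; intro Nq.
    apply Ho. assert (Hpo : multiplex_of V E S (p, o)).
    { eapply mult_step; eauto. unfold Gamma; simpl.
      split; [exact (mult_edge E S _ Hu Hh)|split; [auto|left; split; auto]]. }
    exact (proj2 (HWf _ Hpo)). }
  assert (L2' : forall o h, ~ W o -> multiplex_of V E S h -> E o (snd h) -> E o (fst h)).
  { intros o h Ho Hh Eq. apply (L2 o (rev_edge V h)); auto. apply mult_rev; auto. }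
  assert (Rst : forall o g h, ~ W o -> multiplex_of V E S g -> multiplex_of V E S h ->
            Gamma V E g h ->
            (E o (fst g) /\ E o (snd g) <-> E o (fst h) /\ E o (snd h))).
  { intros o g h Ho Hg Hh (_ & _ & [[Hf _]|[Hs _]]).
    - rewrite Hf. split; intros [H1 _]; split; auto.
      all: first [apply (L2 o h); now auto | apply (L2 o g); auto; now rewrite Hf].
    - rewrite Hs. split; intros [_ H2]; split; auto.
      all: first [apply (L2' o h); now auto | apply (L2' o g); auto; now rewrite Hs]. }
  assert (Rinv : forall o x y, ~ W o -> In x S -> In y S -> x <> y -> forall g,
            in_impl_class V E (x,y) g ->
            (E o x /\ E o y <-> E o (fst g) /\ E o (snd g))).
  { intros o x y Ho Hx Hy Hxy.
    apply (impl_ind E (x,y) (fun g => E o x /\ E o y <-> E o (fst g) /\ E o (snd g))).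
    - simpl; tauto.
    - intros g0 h Hg0 IH Hgh. rewrite IH. apply Rst; auto.
      + exists x, y; repeat split; auto. left; auto.
      + exists x, y; repeat split; auto. left; eapply impl_step; eauto. }
  assert (K : forall o, ~ W o -> forall w, W w -> E o w -> forall w', W w' -> E o w').
  { intros o Ho w Hw Ew w' Hw'.
    destruct Hw as [f [Hf Hfw]].
    assert (Rf : E o (fst f) /\ E o (snd f)).
    { destruct Hfw as [Hfw|Hfw]; rewrite <- Hfw in Ew; split; auto.
      all: first [apply (L2 o f); now auto | apply (L2' o f); now auto]. }
    destruct Hf as (x & y & Hx & Hy & Hxy & Hc).
    assert (Rxy : E o x /\ E o y).
    { destruct Hc as [Hc|Hc].
      - apply (Rinv o x y Ho Hx Hy Hxy f Hc); auto.
      - apply (Rinv o x y Ho Hx Hy Hxy _ Hc); destruct f; simpl in *; tauto. }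
    assert (allS : forall z, In z S -> E o z).
    { intros z Hz. destruct (classic (z = x)) as [->|Hzx]; [tauto|].
      apply (L2 o (x, z)); simpl; [auto| |tauto]. apply mult_self; auto. }
    destruct Hw' as [f' [Hf' Hf'w]].
    destruct Hf' as (x' & y' & Hx' & Hy' & Hxy' & Hc').
    destruct Hc' as [Hc'|Hc'].
    - apply (Rinv o x' y' Ho Hx' Hy' Hxy' f') in Hc'.
      destruct Hf'w as [<-|<-]; apply Hc'; auto.
    - apply (Rinv o x' y' Ho Hx' Hy' Hxy' _) in Hc'. destruct f'; simpl in *.
      destruct Hf'w as [<-|<-]; apply Hc'; auto. }
  assert (Ebw : forall w, W w -> E b w).
  { intros w Hw. exact (K b Hb a Ha (Hsym _ _ Eab) w Hw). }

  set (Rc := fun x y => W x /\ W y /\ ~ E x y).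
  assert (CW : forall s x, W s -> clos_refl_trans V Rc s x -> W x).
  { intros s x Hs H. induction H; auto. destruct H as (_ & H & _); auto. }
  set (Cover := fun s => forall w, W w -> span V (multiplex_of V E [b; s]) w).
  assert (Hbs : forall s, In s S -> b <> s).
  { intros s Hs ->. apply Hb, HSW, Hs. }
  assert (chain : forall s, In s S -> forall w, clos_refl_trans V Rc s w ->
            in_impl_class V E (b, s) (b, w)).
  { intros s Hs w H. apply clos_rt_rtn1 in H. induction H.
    - apply impl_refl; simpl; auto.
    - eapply impl_step; [exact IHclos_refl_trans_n1|].
      destruct H as (Hy & Hz & Nyz). unfold Gamma; simpl.
      split; [auto|split; [auto|left; split; auto]]. }
  assert (coverC : forall s, In s S -> (forall w, W w -> clos_refl_trans V Rc s w) -> Cover s).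
  { intros s Hs Hall w Hw. exists (b, w); split; [|right; reflexivity].
    exists b, s; repeat split; simpl; auto. left. apply chain; auto. }
  assert (case1 : forall s s', In s S -> In s' S -> s <> s' -> clos_refl_trans V Rc s s' ->
            forall w, W w -> clos_refl_trans V Rc s w).
  { intros s s' Hs Hs' Hss' Cs'.
    assert (Step1 : forall y, In y S -> clos_refl_trans V Rc s y).
    { intros y Hy. apply NNPP; intro Ny.
      assert (adj : forall c, clos_refl_trans V Rc s c -> E c y).
      { intros c Hc. apply NNPP; intro Nc. apply Ny.
        eapply rt_trans; [exact Hc|]. apply rt_step.
        split; [eapply CW; [apply HSW, Hs|exact Hc]|split; auto]. }
      assert (ch : forall c, clos_refl_trans V Rc s c -> in_impl_class V E (s, y) (c, y)).
      { intros c Hc. pose proof Hc as Hc0. apply clos_rt_rtn1 in Hc. induction Hc.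
        - apply impl_refl; simpl. apply adj, rt_refl.
        - assert (Cy0 : clos_refl_trans V Rc s y0) by (apply clos_rtn1_rt; auto).
          eapply impl_step; [exact (IHHc Cy0)|].
          destruct H as (Hy0 & Hz & N). unfold Gamma; simpl.
          split; [apply adj; auto|split; [apply adj; auto|right; split; auto]]. }
      assert (Hsy : s <> y) by (intros ->; apply Ny, rt_refl).
      assert (Hs'y : s' <> y) by (intros ->; apply Ny, Cs').
      destruct (Hcol s y s' y Hs Hy Hs' Hy Hsy Hs'y (or_introl (ch s' Cs'))) as [[? _]|[? _]];
        auto. }
    intros w [f [Hf Hfw]].
    destruct Hf as (x & y & Hx & Hy & Hxy & Hc).
    assert (Inv : forall g, in_impl_class V E (x, y) g ->
              clos_refl_trans V Rc s (fst g) /\ clos_refl_trans V Rc s (snd g)).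
    { apply impl_ind; [simpl; auto|].
      intros g0 h Hg0 [C1 C2] Hgh.
      assert (Hh : multiplex_of V E S h).
      { exists x, y; repeat split; auto. left; eapply impl_step; eauto. }
      destruct (HWf h Hh) as [W1 W2].
      assert (W1' : W (fst g0)) by (eapply CW; [apply HSW, Hs|exact C1]).
      assert (W2' : W (snd g0)) by (eapply CW; [apply HSW, Hs|exact C2]).
      destruct Hgh as (_ & _ & [[Hf Hn]|[Hs0 Hn]]).
      - rewrite <- Hf; split; auto. eapply rt_trans; [exact C2|]. apply rt_step.
        split; [|split]; auto.
      - rewrite <- Hs0; split; auto. eapply rt_trans; [exact C1|]. apply rt_step.
        split; [|split]; auto. }
    destruct Hc as [Hc|Hc]; apply Inv in Hc; destruct f; simpl in *;
      destruct Hfw as [<-|<-]; tauto. }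
  set (O1 := fun u => ~ W u /\ forall w, W w -> E u w).
  assert (Inv : forall s, In s S -> ~ Cover s -> forall g, in_impl_class V E (b, s) g ->
            O1 (fst g) /\ clos_refl_trans V Rc s (snd g)).
  { intros s Hs NC.
    enough (H : forall g, in_impl_class V E (b, s) g ->
              (O1 (fst g) /\ clos_refl_trans V Rc s (snd g)) \/ Cover s).
    { intros g Hg. destruct (H g Hg); [auto|contradiction]. }
    apply impl_ind.
    - left; split; [split; auto|apply rt_refl].
    - intros g0 h Hg0 [[[O1n O1a] Cg]|Cov] Hgh; [|right; auto].
      assert (Hh : in_impl_class V E (b, s) h) by (eapply impl_step; eauto).
      assert (Wg : W (snd g0)) by (eapply CW; [apply HSW, Hs|exact Cg]).
      destruct Hgh as (_ & Eh & [[Hf Hn]|[Hs0 Hn]]).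
      + destruct (classic (W (snd h))) as [Wh|Wh].
        * left. rewrite <- Hf; split; [split; auto|].
          eapply rt_trans; [exact Cg|]. apply rt_step. split; [|split]; auto.
        * right. intros w Hw.
          assert (Nw : ~ E (snd h) w).
          { intro Ew. apply Hn, Hsym. exact (K (snd h) Wh w Hw Ew (snd g0) Wg). }
          exists (fst h, w); split; [|right; reflexivity].
          exists b, s; repeat split; simpl; auto. left.
          eapply impl_step; [exact Hh|]. unfold Gamma; simpl.
          split; [auto|split; [rewrite <- Hf; auto|left; split; auto]].
      + left. rewrite <- Hs0. split; auto.
        assert (NWf : ~ W (fst h)) by (intro Hw; apply Hn, O1a, Hw).
        split; auto. intros w Hw. apply (K (fst h) NWf (snd g0) Wg); auto.
        rewrite Hs0; auto. }
  destruct (classic (exists s, In s S /\ Cover s)) as [[s [Hs Cs]]|NoC].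
  - assert (Hsp : forall v, span V (multiplex_of V E [b; s]) v -> span V M v).
    { apply Hmax.
      - exists [b; s]; split; [apply simplex2; auto|intro; tauto].
      - intros v Hv. apply Cs, HWM, Hv. }
    apply Hb, HWM, Hsp. exists (b, s); split; [|left; reflexivity].
    apply mult_self; simpl; auto.
  - assert (Xb : forall y, In y S -> forall u w, In u (b :: S) -> In w (b :: S) -> u <> w ->
              in_color_class V E (b, y) (u, w) -> (b = u /\ y = w) \/ (b = w /\ y = u)).
    { intros y Hy u w Hu0 Hw Huw Hc.
      assert (NC : ~ Cover y) by (intro; apply NoC; eauto).
      assert (Hnw : forall z, In z (b :: S) -> O1 z -> z = b).
      { intros z [<-|Hz] [Hz' _]; auto. exfalso; apply Hz', HSW, Hz. }
      destruct Hc as [Hc|Hc]; apply (Inv y Hy NC) in Hc; simpl in Hc; destruct Hc as [O Cc].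
      - apply Hnw in O; auto. subst u. left; split; auto.
        destruct Hw as [<-|Hw]; [contradiction|].
        apply NNPP; intro Nyw. apply NC, coverC; auto. apply (case1 y w); auto.
      - apply Hnw in O; auto. subst w. right; split; auto.
        destruct Hu0 as [<-|Hu0]; [contradiction|].
        apply NNPP; intro Nyu. apply NC, coverC; auto. apply (case1 y u); auto. }
    assert (HbS : simplex V E (b :: S)).
    { split; [simpl; lia|split; [constructor; auto; intro; apply Hb, HSW; auto|split]].
      - intros x y [<-|Hx] [<-|Hy] Hxy; [contradiction| | |auto].
        + apply Ebw, HSW, Hy.
        + apply Hsym, Ebw, HSW, Hx.
      - intros x y u w Hx Hy Hu0 Hw Hxy Huw Hc.
        destruct Hx as [<-|Hx].
        + destruct Hy as [<-|Hy]; [contradiction|]. apply Xb; auto.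
        + destruct Hy as [<-|Hy].
          * change (in_color_class V E (rev_edge V (b, x)) (u, w)) in Hc.
            apply color_rev_e in Hc; auto.
            destruct (Xb x Hx u w Hu0 Hw Huw Hc); tauto.
          * assert (Hm : multiplex_of V E S (u, w)) by (exists x, y; repeat split; auto).
            destruct (HWf _ Hm) as [Wu Ww]; simpl in *.
            destruct Hu0 as [<-|Hu0]; [contradiction|].
            destruct Hw as [<-|Hw]; [contradiction|]. apply Hcol; auto. }
    assert (Hsp : forall v, span V (multiplex_of V E (b :: S)) v -> span V M v).
    { apply Hmax.
      - exists (b :: S); split; [exact HbS|intro; tauto].
      - intros v Hv. apply HWM in Hv. destruct Hv as [f [Hf Hfv]].
        exists f; split; auto. eapply mult_mono; [|exact Hf]. apply incl_tl, incl_refl. }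
    apply Hb, HWM, Hsp. exists (b, s1); split; [|left; reflexivity].
    apply mult_self; simpl; auto.
Qed.
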